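(* Let $N\ge 2$ and let $\mathcal{B}=\{|\psi_i^{+}\rangle,|\psi_i^{-}\rangle : i=1,\dots,2^{N-1}\}$ be an $N$-qubit GHZ-type basis as defined in the context, with $\alpha_i\ge\beta_i>0$ for every $i$ (so that every state of $\mathcal{B}$ is entangled). If $S\subseteq\mathcal{B}$ is perfectly LOCC distinguishable with respect to some spatial configuration of the $N$ qubits, then $|S|\le 2^{N-1}$. Moreover, this bound is attained: there exists $S\subseteq\mathcal{B}$ with $|S|=2^{N-1}$ (one state from each conjugate pair $\{|\psi_i^{+}\rangle,|\psi_i^{-}\rangle\}$) that is perfectly LOCC distinguishable when all $N$ qubits are held by $N$ different, spatially separated parties.
   Context: For an $N$-bit string $\mathbf{k}\in\{0,1\}^N$ let $\overline{\mathbf{k}}$ denote its bitwise complement. The $2^N$ strings split into $2^{N-1}$ unordered pairs $\{\mathbf{k}_i,\overline{\mathbf{k}_i}\}$, $i=1,\dots,2^{N-1}$. For each $i$ choose real numbers $\alpha_i\ge\beta_i\ge 0$ with $\alpha_i^2+\beta_i^2=1$, and define the $i$-th conjugate pair $|\psi_i^{+}\rangle=\alpha_i|\mathbf{k}_i\rangle+\beta_i|\overline{\mathbf{k}_i}\rangle$, $|\psi_i^{-}\rangle=\beta_i|\mathbf{k}_i\rangle-\alpha_i|\overline{\mathbf{k}_i}\rangle$, where $|\mathbf{k}\rangle$ is the computational basis state of $(\mathbb{C}^2)^{\otimes N}$. These $2^N$ states form an orthonormal basis. A spatial configuration is a partition of the $N$ qubits into at least two nonempty groups, each group held by a distinct party;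 LOCC refers to local quantum operations by the parties on their own groups of qubits together with classical communication. A set $S$ of mutually orthogonal states is perfectly LOCC distinguishable in a configuration if there is an LOCC protocol which, when given an unknown state from $S$, identifies which state it is with probability $1$. *)

(* Defs.v *)
(* Scalars: an arbitrary numClosedFieldType C (model of the complex numbers). *)
From HB Require Import structures.
From mathcomp Require Import all_boot all_order all_algebra.
Set Implicit Arguments. Unset Strict Implicit. Unset Printing Implicit Defensive.
Import Order.TTheory GRing.Theory Num.Theory.
Local Open Scope ring_scope.

Definition bits (N : nat) := {ffun 'I_N -> bool}.
Definition bcomp (N : nat) (k : bits N) : bits N := [ffun q => ~~ k q].

Section Q.
Variable C : numClosedFieldType.
Variable N : nat.

(* vectors of (C^2)^{\otimes N} in the computational basis, and operators *)
Definition vec := bits N -> C.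
Definition op := bits N -> bits N -> C.

Definition ket (k : bits N) : vec := fun x => (x == k)%:R.
Definition applyop (K : op) (v : vec) : vec := fun x => \sum_y K x y * v y.
Definition norm2 (v : vec) : C := \sum_x `|v x| ^+ 2.

Definition pairing (k : 'I_(2 ^ (N - 1)) -> bits N) : Prop :=
  (forall x : bits N, exists i, x = k i \/ x = bcomp (k i)) /\
  (forall i j, (k i = k j \/ k i = bcomp (k j)) -> i = j).

(* GHZ-type basis: label (i, true) is psi_i^+, (i, false) is psi_i^- *)
Definition ghz (k : 'I_(2 ^ (N - 1)) -> bits N) (alpha beta : 'I_(2 ^ (N - 1)) -> C)
  (l : 'I_(2 ^ (N - 1)) * bool) : vec :=
  fun x => if l.2 then alpha l.1 * ket (k l.1) x + beta l.1 * ket (bcomp (k l.1)) x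
           else beta l.1 * ket (k l.1) x - alpha l.1 * ket (bcomp (k l.1)) x.

(* spatial configuration: qubit q is held by party part q *)
Variable M : nat.
Variable part : 'I_N -> 'I_M.

Definition agree_off (p : 'I_M) (x y : bits N) : Prop :=
  forall q, part q != p -> x q = y q.
Definition agree_on (p : 'I_M) (x y : bits N) : Prop :=
  forall q, part q = p -> x q = y q.

(* K acts as K_p (x) Id on the qubits held by the other parties *)
Definition local_op (p : 'I_M) (K : op) : Prop :=
  (forall x y, ~ agree_off p x y -> K x y = 0) /\
  (forall x y x' y', agree_off p x y -> agree_off p x' y' ->
     agree_on p x x' -> agree_on p y y' -> K x y = K x' y').

(* finite-round LOCC protocol: a tree; at each node one party performs a local
   measurement (Kraus operators), the outcome is broadcast, and the protocol
   continues on the branch; leaves carry the guessed label *)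
Variable L : eqType.
Inductive protocol : Type :=
  | Leaf : L -> protocol
  | Node : 'I_M -> seq (op * protocol) -> protocol.

Fixpoint valid (P : protocol) : Prop :=
  match P with
  | Leaf _ => True
  | Node p br =>
      (forall x y, \sum_(Kt <- br) \sum_z (Kt.1 z x)^* * Kt.1 z y = (x == y)%:R) /\
      (fix go (br : seq (op * protocol)) : Prop :=
         match br with
         | [::] => True
         | (K, t) :: br' => local_op p K /\ valid t /\ go br'
         end) br
  end.

(* probability that the protocol, run on (unnormalised) state v, outputs label s *)
Fixpoint succ_prob (P : protocol) (s : L) (v : vec) : C :=
  match P with
  | Leaf l => if l == s then norm2 v else 0
  | Node _ br =>
      (fix go (br : seq (op * protocol)) : C :=
         match br with
         | [::] => 0
         | (K, t) :: br' => succ_prob t s (applyop K v) + go br'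
         end) br
  end.

Definition LOCC_dist (psi : L -> vec) (S : pred L) : Prop :=
  exists P : protocol, valid P /\ forall s, S s -> succ_prob P s (psi s) = 1.

End Q.

Definition configuration (N M : nat) (part : 'I_N -> 'I_M) : Prop :=
  (2 <= M)%N /\ forall p : 'I_M, exists q, part q = p.

(* Main.v *)
Require Import Defs.
From HB Require Import structures.
From mathcomp Require Import all_boot all_order all_algebra.
From Stdlib Require Import FunctionalExtensionality Classical.
From Stdlib Require List.
Set Implicit Arguments. Unset Strict Implicit. Unset Printing Implicit Defensive.
Import Order.TTheory GRing.Theory Num.Theory.
Local Open Scope ring_scope.

Section Gen.
Variable C : numClosedFieldType.
Variables N M : nat.
Variable part : 'I_N -> 'I_M.
Variable L : eqType.

Local Notation vec := (vec C N).
Local Notation op := (op C N).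
Local Notation protocol := (protocol C N M L).

Lemma protocol_ind2 (Q : protocol -> Prop) :
  (forall l : L, Q (Leaf C N M l)) ->
  (forall p br, List.Forall (fun Kt => Q Kt.2) br -> Q (Node p br)) ->
  forall P, Q P.
Proof.
move=> HL HN; fix F 1 => P; case: P => [l|p br]; first exact: HL.
apply: HN; elim: br => [|Kt br IH]; first by constructor.
by constructor; [exact: F | exact: IH].
Qed.

Fixpoint leaves (P : protocol) : seq ((vec -> vec) * L)%type :=
  match P with
  | Leaf l => [:: (id, l)]
  | Node p br =>
      (fix go (br : seq (op * protocol)%type) : seq ((vec -> vec) * L)%type :=
         match br with
         | [::] => [::]
         | (K, t) :: br' =>
             [seq ((fun v => g.1 (applyop K v)), g.2) | g <- leaves t] ++ go br'
         end) br
  end.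

Lemma succ_leaves P s v :
  succ_prob P s v = \sum_(g <- leaves P) (if g.2 == s then norm2 (g.1 v) else 0).
Proof.
elim/protocol_ind2: P v => [l|p br IH] v /=; first by rewrite big_seq1.
elim: br IH => [|[K t] br IHb] IH /=; first by rewrite big_nil.
inversion IH; subst.
by rewrite big_cat big_map /= IHb // H1.
Qed.

Lemma norm2_applyop_sum (br : seq (op * protocol)%type) v :
  (forall x y, \sum_(Kt <- br) \sum_z (Kt.1 z x)^* * Kt.1 z y = (x == y)%:R) ->
  \sum_(Kt <- br) norm2 (applyop Kt.1 v) = norm2 v.
Proof.
move=> H.
have E : forall K : op, norm2 (applyop K v) =
   \sum_x \sum_y ((v x)^* * v y) * \sum_z ((K z x)^* * K z y).
  move=> K; rewrite /norm2 /applyop.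
  under eq_bigr => z _ do rewrite normCK rmorph_sum mulr_sumr.
  rewrite exchange_big /=; apply: eq_bigr => x _.
  under eq_bigr => z _ do rewrite mulr_suml.
  rewrite exchange_big /=; apply: eq_bigr => y _.
  rewrite mulr_sumr; apply: eq_bigr => z _.
  by rewrite rmorphM /= [LHS]mulrC mulrACA [RHS]mulrC.
under eq_bigr => Kt _ do rewrite E.
rewrite exchange_big /=; rewrite /norm2; apply: eq_bigr => x _.
rewrite exchange_big /=.
under eq_bigr => y _ do rewrite -mulr_sumr H.
rewrite (bigD1 x) //= eqxx mulr1 big1 ?addr0; last first.
  by move=> y /negbTE; rewrite eq_sym => ->; rewrite mulr0.
by rewrite normCK mulrC.
Qed.


Lemma total_leaves P v : valid part P ->
  \sum_(g <- leaves P) norm2 (g.1 v) = norm2 v.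
Proof.
elim/protocol_ind2: P v => [l|p br IH] v /=; first by rewrite big_seq1.
case=> H Hgo; rewrite -(norm2_applyop_sum v H).
elim: br IH Hgo {H} => [|[K t] br IHb] IH /=; first by rewrite !big_nil.
inversion IH; subst => -[_ [Vt Hgo]].
by rewrite big_cat big_map big_cons /= IHb // H1.
Qed.

Definition lin_fn (f : vec -> vec) := forall a b (v w : vec),
  f (fun x => a * v x + b * w x) = (fun x => a * f v x + b * f w x).

Definition onQ p0 (u : bits N -> C) := forall x x', agree_on part p0 x x' -> u x = u x'.
Definition offQ p0 (u : bits N -> C) := forall x x', agree_off part p0 x x' -> u x = u x'.

Definition prodform p0 (v00 v01 v10 v11 : vec) :=
  exists u0 u1 w0 w1, [/\ onQ p0 u0, onQ p0 u1, offQ p0 w0, offQ p0 w1 &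
   forall x, [/\ v00 x = u0 x * w0 x, v01 x = u0 x * w1 x,
                 v10 x = u1 x * w0 x & v11 x = u1 x * w1 x]].

Definition xorm (S : pred 'I_N) (a : bits N) (y : bits N) : bits N :=
  [ffun q => if S q then y q (+) a q else y q].

Lemma xorm_inj S a : injective (xorm S a).
Proof.
move=> y1 y2 E; apply/ffunP => q; have := congr1 (fun f : bits N => f q) E.
rewrite /xorm !ffunE.
by case: (S q) => //; case: (y1 q); case: (y2 q); case: (a q).
Qed.

Lemma lin_applyop (K : op) : lin_fn (applyop K).
Proof.
move=> a b v w; apply: functional_extensionality => x; rewrite /applyop.
rewrite !mulr_sumr -big_split /=; apply: eq_bigr => y _.
by rewrite mulrDr !mulrA [a * _]mulrC [b * _]mulrC.
Qed.

Lemma applyop_sameQ p0 (K : op) (u w : bits N -> C) :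
  local_op part p0 K -> onQ p0 u -> offQ p0 w ->
  onQ p0 (fun x => \sum_y K x y * u y) /\
  forall x, applyop K (fun y => u y * w y) x = (\sum_y K x y * u y) * w x.
Proof.
move=> [K0 K1] Hu Hw; split.
  move=> x x' Hxx'.
  pose a : bits N := [ffun q => x q (+) x' q].
  rewrite (reindex_inj (@xorm_inj (fun q => part q != p0) a)) /=.
  apply: eq_bigr => y _.
  have Eu : u (xorm (fun q => part q != p0) a y) = u y.
    by apply: Hu => q Hq; rewrite /xorm ffunE /= Hq eqxx.
  rewrite Eu; congr (_ * _).
  have [Hxy|Hxy] := classic (agree_off part p0 x' y).
    apply: (K1 x _ x' y _ Hxy) => //.
    - move=> q Hq; rewrite /xorm !ffunE /= Hq /= (Hxy q Hq).
      by case: (x q); case: (y q).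
    - by move=> q Hq; rewrite /xorm ffunE /= Hq eqxx.
  rewrite (K0 x' y) // K0 //; move=> H; apply: Hxy => q Hq; have := H q Hq.
  by rewrite /xorm !ffunE /= Hq /=; case: (x q); case: (x' q); case: (y q).
move=> x; rewrite /applyop mulr_suml; apply: eq_bigr => y _.
have [Hxy|Hxy] := classic (agree_off part p0 x y).
  by rewrite (Hw x y Hxy) mulrA.
by rewrite K0 // !mul0r.
Qed.

Lemma applyop_otherQ p p0 (K : op) (u w : bits N -> C) :
  p != p0 -> local_op part p K -> onQ p0 u -> offQ p0 w ->
  offQ p0 (fun x => \sum_y K x y * w y) /\
  forall x, applyop K (fun y => u y * w y) x = u x * (\sum_y K x y * w y).
Proof.
move=> Hpp0 [K0 K1] Hu Hw; split.
  move=> x x' Hxx'.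
  pose a : bits N := [ffun q => x q (+) x' q].
  rewrite (reindex_inj (@xorm_inj (fun q => part q == p0) a)) /=.
  apply: eq_bigr => y _.
  have Ew : w (xorm (fun q => part q == p0) a y) = w y.
    apply: Hw => q Hq; rewrite /xorm ffunE /=.
    by rewrite (negbTE Hq).
  rewrite Ew; congr (_ * _).
  have [Hxy|Hxy] := classic (agree_off part p x' y).
    apply: (K1 x _ x' y _ Hxy).
    - move=> q Hq; rewrite /xorm !ffunE /=; case: ifP => Hq0.
        rewrite -(Hxy q Hq); by case: (x q); case: (x' q).
      rewrite -(Hxy q Hq); apply: Hxx'; by rewrite Hq0.
    - move=> q Hq; apply: Hxx'; by rewrite Hq.
    - move=> q Hq; rewrite /xorm ffunE /= Hq (negbTE Hpp0) //.
  rewrite (K0 x' y) // K0 //; move=> H; apply: Hxy => q Hq; have := H q Hq.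
  rewrite /xorm !ffunE /=; case: ifP => Hq0.
    by case: (x q); case: (x' q); case: (y q).
  by move=> <-; rewrite Hxx' // Hq0.
move=> x; rewrite /applyop mulr_sumr; apply: eq_bigr => y _.
have [Hxy|Hxy] := classic (agree_off part p x y).
  rewrite (Hu x y) ?mulrA ?[u y * _]mulrC //.
  move=> q Hq; apply: Hxy; rewrite Hq; by rewrite eq_sym.
by rewrite K0 // !mul0r mulr0.
Qed.


Definition pres_fn (f : vec -> vec) := forall p0 v00 v01 v10 v11,
  prodform p0 v00 v01 v10 v11 -> prodform p0 (f v00) (f v01) (f v10) (f v11).

Lemma pres_applyop p (K : op) : local_op part p K -> pres_fn (applyop K).
Proof.
move=> HK p0 v00 v01 v10 v11 [u0 [u1 [w0 [w1 [Hu0 Hu1 Hw0 Hw1 Hv]]]]].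
have E00 : v00 = (fun y => u0 y * w0 y) by apply: functional_extensionality => y; case: (Hv y).
have E01 : v01 = (fun y => u0 y * w1 y) by apply: functional_extensionality => y; case: (Hv y).
have E10 : v10 = (fun y => u1 y * w0 y) by apply: functional_extensionality => y; case: (Hv y).
have E11 : v11 = (fun y => u1 y * w1 y) by apply: functional_extensionality => y; case: (Hv y).
rewrite E00 E01 E10 E11.
have [Ep|Hp] := eqVneq p p0.
  subst p.
  have [Hu0' A0] := applyop_sameQ HK Hu0 Hw0.
  have [_ A1] := applyop_sameQ HK Hu0 Hw1.
  have [Hu1' B0] := applyop_sameQ HK Hu1 Hw0.
  have [_ B1] := applyop_sameQ HK Hu1 Hw1.
  by do 4 eexists; split; [exact: Hu0'|exact: Hu1'|exact: Hw0|exact: Hw1|]; move=> x; split.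
have [Hw0' A0] := applyop_otherQ Hp HK Hu0 Hw0.
have [Hw1' A1] := applyop_otherQ Hp HK Hu0 Hw1.
have [_ B0] := applyop_otherQ Hp HK Hu1 Hw0.
have [_ B1] := applyop_otherQ Hp HK Hu1 Hw1.
by do 4 eexists; split; [exact: Hu0|exact: Hu1|exact: Hw0'|exact: Hw1'|]; move=> x; split.
Qed.

Lemma leaves_prop P : valid part P ->
  forall g, List.In g (leaves P) -> lin_fn g.1 /\ pres_fn g.1.
Proof.
elim/protocol_ind2: P => [l|p br IH] /=.
  by move=> _ g [<-|[]]; split => //.
case=> _ Hgo.
elim: br IH Hgo => [|[K t] br IHb] IH //=.
inversion IH; subst => -[HK [Vt Hgo]] g.
rewrite List.in_app_iff => -[|]; last by apply: IHb.
move=> /List.in_map_iff [g' [<- Hg']] /=.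
have [Lg Pg] := H1 Vt g' Hg'.
split.
  move=> a b v w /=; rewrite lin_applyop; exact: Lg.
move=> p0 v00 v01 v10 v11 Hpf; apply: Pg; exact: pres_applyop HK _ _ _ _ _ Hpf.
Qed.

End Gen.

Section Norms.
Variable C : numClosedFieldType.
Variables N M : nat.
Variable part : 'I_N -> 'I_M.
Local Notation vec := (vec C N).

Lemma norm2_ge0 (v : vec) : 0 <= norm2 v.
Proof. by apply: sumr_ge0 => x _; rewrite exprn_ge0. Qed.

Lemma norm2_eq0 (v : vec) : norm2 v = 0 -> forall x, v x = 0.
Proof.
move=> H x.
have H1 : forall i, predT i -> 0 <= `|v i| ^+ 2 by move=> y _; rewrite exprn_ge0.
have := @psumr_eq0P _ _ _ _ H1 H x isT.
by move=> /eqP; rewrite sqrf_eq0 normr_eq0 => /eqP.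
Qed.

Lemma norm2_comb (a b : vec) g d :
  \sum_x a x * (b x)^* = 0 ->
  norm2 (fun x => g * a x + d * b x) = `|g| ^+ 2 * norm2 a + `|d| ^+ 2 * norm2 b.
Proof.
move=> H.
have H' : \sum_x b x * (a x)^* = 0.
  rewrite [RHS](_ : 0 = (\sum_x a x * (b x)^*)^*); last by rewrite H conjC0.
  rewrite rmorph_sum.
  by apply: eq_bigr => x _; rewrite rmorphM /= conjCK mulrC.
rewrite /norm2 !mulr_sumr.
have E : forall x, `|g * a x + d * b x| ^+ 2 =
   `|g| ^+ 2 * `|a x| ^+ 2 + `|d| ^+ 2 * `|b x| ^+ 2
   + (g * d^*) * (a x * (b x)^*) + (d * g^*) * (b x * (a x)^*).
  move=> x; rewrite !normCK rmorphD /= !rmorphM /=.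
  rewrite mulrDl !mulrDr.
  have e1 : g * a x * (g^* * (a x)^*) = g * g^* * (a x * (a x)^*) by rewrite mulrACA.
  have e2 : g * a x * (d^* * (b x)^*) = g * d^* * (a x * (b x)^*) by rewrite mulrACA.
  have e3 : d * b x * (g^* * (a x)^*) = d * g^* * (b x * (a x)^*) by rewrite mulrACA.
  have e4 : d * b x * (d^* * (b x)^*) = d * d^* * (b x * (b x)^*) by rewrite mulrACA.
  rewrite e1 e2 e3 e4 -!addrA; congr (_ + _).
  by rewrite [RHS]addrC [LHS]addrA.
under eq_bigr => x _ do rewrite E.
rewrite !big_split /= -!mulr_sumr H H' !mulr0 !addr0.
by congr (_ + _); rewrite -mulr_sumr.
Qed.

Definition mrg p0 (x y : bits N) : bits N := [ffun q => if part q == p0 then x q else y q].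

Lemma prod_norm p0 (v00 v01 v10 v11 : vec) : prodform part p0 v00 v01 v10 v11 ->
  norm2 v00 * norm2 v11 = norm2 v01 * norm2 v10.
Proof.
move=> [u0 [u1 [w0 [w1 [Hu0 Hu1 Hw0 Hw1 Hv]]]]].
rewrite /norm2 !mulr_suml.
under eq_bigr => x _ do rewrite mulr_sumr.
under [in RHS]eq_bigr => x _ do rewrite mulr_sumr.
rewrite !pair_bigA /=.
pose sw (z : bits N * bits N) := (mrg p0 z.1 z.2, mrg p0 z.2 z.1).
have swK : involutive sw.
  move=> [x y]; rewrite /sw /mrg /=; congr (_, _); apply/ffunP => q; rewrite !ffunE;
  by case: (part q == p0).
rewrite (reindex_inj (inv_inj swK)) /=; apply: eq_bigr => -[x y] _ /=.
have A1 : forall x y, agree_on part p0 (mrg p0 x y) x.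
  by move=> x' y' q Hq; rewrite /mrg ffunE Hq eqxx.
have A2 : forall x y, agree_off part p0 (mrg p0 x y) y.
  by move=> x' y' q Hq; rewrite /mrg ffunE (negbTE Hq).
case: (Hv (mrg p0 x y)) => -> _ _ _.
case: (Hv (mrg p0 y x)) => _ _ _ ->.
case: (Hv x) => _ -> _ _.
case: (Hv y) => _ _ -> _.
rewrite (Hu0 _ _ (A1 x y)) (Hw0 _ _ (A2 x y)) (Hu1 _ _ (A1 y x)) (Hw1 _ _ (A2 y x)).
rewrite !normrM !exprMn.
by rewrite mulrACA [`|w0 y| ^+ 2 * _]mulrC mulrACA [X in _ * X]mulrC.
Qed.

Lemma prod_cross p0 (v00 v01 v10 v11 : vec) : prodform part p0 v00 v01 v10 v11 ->
  (forall x, v00 x = 0) -> \sum_x v01 x * (v10 x)^* = 0.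
Proof.
move=> [u0 [u1 [w0 [w1 [Hu0 Hu1 Hw0 Hw1 Hv]]]]] H0.
apply: big1 => x _; case: (Hv x) => E00 -> -> _.
have := H0 x; rewrite E00 => /eqP; rewrite mulf_eq0 => /orP[] /eqP ->.
  by rewrite !mul0r.
by rewrite rmorphM /= conjC0 !mulr0.
Qed.

End Norms.

Lemma sum_In_eq (C : numClosedFieldType) (T : Type) (r : seq T) (F G : T -> C) :
  (forall g, List.In g r -> F g = G g) -> \sum_(g <- r) F g = \sum_(g <- r) G g.
Proof.
elim: r => [|a r IH] H; first by rewrite !big_nil.
rewrite !big_cons H /=; last by left.
by rewrite IH // => g Hg; apply: H; right.
Qed.

Lemma sum_In0 (C : numClosedFieldType) (T : Type) (r : seq T) (F : T -> C) :
  (forall g, 0 <= F g) -> \sum_(g <- r) F g = 0 -> forall g, List.In g r -> F g = 0.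
Proof.
move=> Hp; elim: r => [|a r IH] //=; rewrite big_cons => H g [<-|Hg].
  move/eqP: H; rewrite paddr_eq0 //; last by apply: sumr_ge0.
  by case/andP => /eqP.
apply: IH => //; move/eqP: H; rewrite paddr_eq0 //; last by apply: sumr_ge0.
by case/andP => _ /eqP.
Qed.

Lemma sum_le_all (C : numClosedFieldType) (T : Type) (r : seq T) (F : T -> C) (P : pred T) :
  (forall g, 0 <= F g) -> \sum_(g <- r | P g) F g <= \sum_(g <- r) F g.
Proof.
move=> Hp; rewrite [X in _ <= X](bigID P) /= lerDl.
by apply: sumr_ge0.
Qed.

Section Key.
Variable C : numClosedFieldType.
Variables N M : nat.
Variable part : 'I_N -> 'I_M.
Variable L : eqType.
Local Notation vec := (vec C N).

Lemma norm2_ket (x : bits N) : norm2 (ket C x) = 1.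
Proof.
rewrite /norm2 (bigD1 x) //= /ket eqxx normr1 expr1n big1 ?addr0 //.
by move=> y /negbTE ->; rewrite normr0 expr0n.
Qed.

Lemma ket_cross (x y : bits N) : x != y -> \sum_z ket C x z * (ket C y z)^* = 0.
Proof.
move=> Hxy; apply: big1 => z _; rewrite /ket.
have [->|Hz] := eqVneq z x; last by rewrite mul0r.
by rewrite (negbTE Hxy) conjC0 mulr0.
Qed.

Lemma zero_others (P : protocol C N M L) s (psi : vec) :
  valid part P -> succ_prob P s psi = 1 -> norm2 psi = 1 ->
  forall g, List.In g (leaves P) -> g.2 != s -> forall x, g.1 psi x = 0.
Proof.
move=> VP Hs Hn g Hg Hgs; apply: norm2_eq0.
have Ht := total_leaves psi VP.
rewrite succ_leaves in Hs.
have E : \sum_(g <- leaves P) (if g.2 != s then norm2 (g.1 psi) else 0) = 0.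
  have Sp : \sum_(g <- leaves P) norm2 (g.1 psi) =
     \sum_(g <- leaves P) (if g.2 == s then norm2 (g.1 psi) else 0) +
     \sum_(g <- leaves P) (if g.2 != s then norm2 (g.1 psi) else 0).
    by rewrite -big_split; apply: eq_bigr => h _; case: (h.2 == s); rewrite /= ?addr0 ?add0r.
  move: Sp; rewrite Ht Hn -Hs => /eqP; rewrite -subr_eq0 opprD addrA subrr add0r oppr_eq0.
  by move=> /eqP.
have := sum_In0 _ E Hg; rewrite Hgs; apply.
by move=> h; case: (h.2 != s); rewrite ?norm2_ge0.
Qed.

Lemma key p0 (x00 x01 x10 x11 : bits N) (P : protocol C N M L) (lip lim lj : L)
  (pip pim pj : vec) (a b g d : C) :
  valid part P ->
  prodform part p0 (ket C x00) (ket C x01) (ket C x10) (ket C x11) ->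
  x00 != x11 -> x01 != x10 ->
  lip != lim -> lj != lip -> lj != lim ->
  0 < a -> 0 < b -> a ^+ 2 + b ^+ 2 = 1 -> g != 0 -> `|g| ^+ 2 + `|d| ^+ 2 = 1 ->
  pip = (fun x => a * ket C x00 x + b * ket C x11 x) ->
  pim = (fun x => b * ket C x00 x + (- a) * ket C x11 x) ->
  pj = (fun x => g * ket C x01 x + d * ket C x10 x) ->
  succ_prob P lip pip = 1 -> succ_prob P lim pim = 1 -> succ_prob P lj pj = 1 -> False.
Proof.
move=> VP PF H0011 H0110 Hipim Hjip Hjim a0 b0 ab1 g0 gd1 Epip Epim Epj Sip Sim Sj.
have na : `|a| ^+ 2 = a ^+ 2 by rewrite ger0_norm // ltW.
have nb : `|b| ^+ 2 = b ^+ 2 by rewrite ger0_norm // ltW.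
have nna : `|- a| ^+ 2 = a ^+ 2 by rewrite normrN.
have Nip : norm2 pip = 1 by rewrite Epip norm2_comb ?ket_cross // !norm2_ket !mulr1 na nb.
have Nim : norm2 pim = 1 by rewrite Epim norm2_comb ?ket_cross // !norm2_ket !mulr1 nna nb addrC.
have Nj : norm2 pj = 1 by rewrite Epj norm2_comb ?ket_cross // !norm2_ket !mulr1.
have LP := leaves_prop VP.
have K00 : forall h, List.In h (leaves P) -> h.2 != lip -> h.2 != lim ->
    forall x, h.1 (ket C x00) x = 0.
  move=> h Hh H1 H2 x.
  have [Lh _] := LP h Hh.
  have Z1 := zero_others VP Sip Nip Hh H1 x.
  have Z2 := zero_others VP Sim Nim Hh H2 x.
  rewrite Epip Lh in Z1; rewrite Epim Lh in Z2.
  have : (a ^+ 2 + b ^+ 2) * h.1 (ket C x00) x = 0.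
    have e : forall u v : C, (a ^+ 2 + b ^+ 2) * u = a * (a * u + b * v) + b * (b * u + - a * v).
      move=> u v; rewrite !mulrDr !mulrA -!expr2 mulrDl (mulrN b a) mulNr [b * a]mulrC.
      by rewrite addrACA subrr addr0.
    by rewrite (e _ (h.1 (ket C x11) x)) Z1 Z2 !mulr0 addr0.
  by rewrite ab1 mul1r.
have Fj : forall h, List.In h (leaves P) -> h.2 == lj ->
    norm2 (h.1 pj) = `|g| ^+ 2 * norm2 (h.1 (ket C x01)) + `|d| ^+ 2 * norm2 (h.1 (ket C x10)).
  move=> h Hh /eqP Hl; have [Lh Ph] := LP h Hh.
  rewrite Epj Lh norm2_comb //.
  apply: (prod_cross (Ph _ _ _ _ _ PF)) => x; apply: K00 => //; rewrite Hl //.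
have Sj' := Sj; rewrite succ_leaves -big_filter in Sj'.
pose T01 := \sum_(h <- leaves P | h.2 == lj) norm2 (h.1 (ket C x01)).
pose T10 := \sum_(h <- leaves P | h.2 == lj) norm2 (h.1 (ket C x10)).
have E1 : `|g| ^+ 2 * T01 + `|d| ^+ 2 * T10 = 1.
  rewrite -Sj /T01 /T10 succ_leaves !mulr_sumr -big_split /=.
  rewrite big_mkcond /= ; apply: sum_In_eq => h Hh.
  by case: ifP => // /(Fj h Hh) ->.
have T01le : T01 <= 1.
  by rewrite -(norm2_ket x01) -(total_leaves _ VP) sum_le_all // => h; apply: norm2_ge0.
have T10le : T10 <= 1.
  by rewrite -(norm2_ket x10) -(total_leaves _ VP) sum_le_all // => h; apply: norm2_ge0.
have T01eq : T01 = 1.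
  have H : `|g| ^+ 2 * (1 - T01) + `|d| ^+ 2 * (1 - T10) = 0.
    by rewrite !mulrBr !mulr1 addrACA -opprD E1 gd1 subrr.
  move/eqP: H; rewrite paddr_eq0 ?mulr_ge0 ?exprn_ge0 ?subr_ge0 //.
  case/andP; rewrite mulf_eq0 expf_eq0 /= normr_eq0 (negbTE g0) /= subr_eq0.
  by move=> /eqP <-.
have K01 : forall h, List.In h (leaves P) -> h.2 != lj -> norm2 (h.1 (ket C x01)) = 0.
  move=> h Hh Hl.
  have E : \sum_(h <- leaves P) (if h.2 != lj then norm2 (h.1 (ket C x01)) else 0) = 0.
    have Sp : \sum_(h <- leaves P) norm2 (h.1 (ket C x01)) =
       \sum_(h <- leaves P) (if h.2 == lj then norm2 (h.1 (ket C x01)) else 0) +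
       \sum_(h <- leaves P) (if h.2 != lj then norm2 (h.1 (ket C x01)) else 0).
      by rewrite -big_split; apply: eq_bigr => h' _; case: (h'.2 == lj); rewrite /= ?addr0 ?add0r.
    move: Sp; rewrite (total_leaves _ VP) norm2_ket -big_mkcond -/T01 T01eq => /eqP.
    rewrite -subr_eq0 opprD addrA subrr add0r oppr_eq0.
    by move=> /eqP.
  have := sum_In0 _ E Hh; rewrite Hl; apply.
  by move=> h'; case: (h'.2 != lj); rewrite ?norm2_ge0.
have Z : forall h, List.In h (leaves P) -> h.2 == lip -> norm2 (h.1 pip) = 0.
  move=> h Hh /eqP Hl; have [Lh Ph] := LP h Hh.
  have n01 : norm2 (h.1 (ket C x01)) = 0 by apply: K01 => //; rewrite Hl eq_sym.
  have Hm : forall x, b * h.1 (ket C x00) x + - a * h.1 (ket C x11) x = 0.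
    move=> x; have := zero_others VP Sim Nim Hh _ x; rewrite Epim Lh; apply.
    by rewrite Hl.
  have := prod_norm (Ph _ _ _ _ _ PF); rewrite n01 mul0r => /eqP.
  rewrite mulf_eq0 => Hor.
  have [Z0 Z1] : (forall x, h.1 (ket C x00) x = 0) /\ (forall x, h.1 (ket C x11) x = 0).
    case/orP: Hor => /eqP /norm2_eq0 Hz.
      split => // x; have := Hm x; rewrite Hz mulr0 add0r mulNr => /eqP.
      by rewrite oppr_eq0 mulf_eq0 (gt_eqF a0) => /eqP.
    split => // x; have := Hm x; rewrite Hz mulr0 addr0 => /eqP.
    by rewrite mulf_eq0 (gt_eqF b0) => /eqP.
  rewrite Epip Lh /norm2 big1 // => x _; by rewrite Z0 Z1 !mulr0 addr0 normr0 expr0n.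
have := Sip; rewrite succ_leaves big_mkcond /=.
rewrite (sum_In_eq (G := fun _ => 0)); first by rewrite big1 // => /eqP; rewrite eq_sym oner_eq0.
move=> h Hh; case: ifP => // Hl; exact: Z h Hh Hl.
Qed.

End Key.

Section Comb.
Variable C : numClosedFieldType.
Variables N M : nat.
Variable part : 'I_N -> 'I_M.
Variable p0 : 'I_M.

Definition Qm (w z : bits N) := [forall q, (part q == p0) ==> (z q == w q)].
Definition Om (w z : bits N) := [forall q, (part q != p0) ==> (z q == w q)].
Definition mixQ (y : bits N) := mrg part p0 y (bcomp y).

Lemma bcompK : involutive (@bcomp N).
Proof. by move=> y; apply/ffunP => q; rewrite !ffunE negbK. Qed.

Lemma eq_split (w z : bits N) : (z == w) = Qm w z && Om w z.
Proof.
apply/eqP/andP => [->|[/forallP H1 /forallP H2]].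
  by split; apply/forallP => q; apply/implyP.
apply/ffunP => q; case E: (part q == p0).
  by have := H1 q; rewrite E => /eqP.
by have := H2 q; rewrite E => /eqP.
Qed.

Lemma ket_split (w : bits N) z : ket C w z = (Qm w z)%:R * (Om w z)%:R.
Proof. by rewrite /ket eq_split -natrM mulnb. Qed.

Lemma Qm_ext (w w' z : bits N) : (forall q, part q = p0 -> w q = w' q) -> Qm w z = Qm w' z.
Proof. by move=> H; apply: eq_forallb => q; case E: (part q == p0) => //=; rewrite H //; apply/eqP. Qed.

Lemma Om_ext (w w' z : bits N) : (forall q, part q != p0 -> w q = w' q) -> Om w z = Om w' z.
Proof. by move=> H; apply: eq_forallb => q; case E: (part q != p0) => //=; rewrite H. Qed.

Lemma ket_prodform (y : bits N) :
  prodform part p0 (ket C y) (ket C (mixQ y)) (ket C (bcomp (mixQ y))) (ket C (bcomp y)).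
Proof.
exists (fun z => (Qm y z)%:R), (fun z => (Qm (bcomp y) z)%:R),
       (fun z => (Om y z)%:R), (fun z => (Om (bcomp y) z)%:R).
split.
- move=> x x' H; suff -> : Qm y x = Qm y x' by []; apply: eq_forallb => q.
  by case E: (part q == p0) => //=; rewrite H //; apply/eqP.
- move=> x x' H; suff -> : Qm (bcomp y) x = Qm (bcomp y) x' by []; apply: eq_forallb => q.
  by case E: (part q == p0) => //=; rewrite H //; apply/eqP.
- move=> x x' H; suff -> : Om y x = Om y x' by []; apply: eq_forallb => q.
  by case E: (part q != p0) => //=; rewrite H.
- move=> x x' H; suff -> : Om (bcomp y) x = Om (bcomp y) x' by []; apply: eq_forallb => q.
  by case E: (part q != p0) => //=; rewrite H.
move=> z; rewrite !ket_split.
have e1 : Qm (mixQ y) z = Qm y z.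
  by apply: Qm_ext => q Hq; rewrite /mixQ /mrg ffunE Hq eqxx.
have e2 : Om (mixQ y) z = Om (bcomp y) z.
  by apply: Om_ext => q Hq; rewrite /mixQ /mrg ffunE (negbTE Hq).
have e3 : Qm (bcomp (mixQ y)) z = Qm (bcomp y) z.
  by apply: Qm_ext => q Hq; rewrite /mixQ /mrg !ffunE Hq eqxx.
have e4 : Om (bcomp (mixQ y)) z = Om y z.
  by apply: Om_ext => q Hq; rewrite /mixQ /mrg !ffunE (negbTE Hq) negbK.
by rewrite e1 e2 e3 e4.
Qed.

Lemma mixQK : involutive mixQ.
Proof.
by move=> y; apply/ffunP => q; rewrite /mixQ /mrg !ffunE; case: (part q == p0); rewrite ?ffunE ?negbK.
Qed.

Lemma bcomp_mixQ y : bcomp (mixQ y) = mixQ (bcomp y).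
Proof.
by apply/ffunP => q; rewrite /mixQ /mrg !ffunE; case: (part q == p0); rewrite ?ffunE.
Qed.

End Comb.

Section Main.
Variable C : numClosedFieldType.
Variable N : nat.
Hypothesis hN : (2 <= N)%N.
Variable k : 'I_(2 ^ (N - 1)) -> bits N.
Hypothesis hk : pairing k.
Variables alpha beta : 'I_(2 ^ (N - 1)) -> C.
Hypothesis hab : forall i, 0 < beta i <= alpha i.
Hypothesis hnorm : forall i, alpha i ^+ 2 + beta i ^+ 2 = 1.

Local Notation I := 'I_(2 ^ (N - 1)).

Lemma idx_ex (x : bits N) : exists i : I, (x == k i) || (x == bcomp (k i)).
Proof. by have [i [->|->]] := hk.1 x; exists i; rewrite eqxx ?orbT. Qed.

Definition idx (x : bits N) : I := xchoose (idx_ex x).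

Lemma idxP x : x = k (idx x) \/ x = bcomp (k (idx x)).
Proof. by have /orP[/eqP|/eqP] := xchooseP (idx_ex x); [left|right]. Qed.

Lemma idx_uniq x i : x = k i \/ x = bcomp (k i) -> idx x = i.
Proof.
move=> H; apply: hk.2; have := idxP x.
case: H => -> [] E.
- by left.
- by right; apply: (inv_inj (@bcompK N)); rewrite bcompK.
- by right.
- by left; apply: (inv_inj (@bcompK N)).
Qed.

Lemma alpha_pos i : 0 < alpha i.
Proof. by have /andP[b0 ba] := hab i; exact: lt_le_trans b0 ba. Qed.
Lemma beta_pos i : 0 < beta i.
Proof. by have /andP[b0 _] := hab i. Qed.


Lemma part1 (M : nat) (part : 'I_N -> 'I_M) : configuration part ->
  forall S : {set I * bool},
    LOCC_dist part (ghz k alpha beta) (mem S) -> (#|S| <= 2 ^ (N - 1))%N.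
Proof.
move=> [HM Hsurj] S [P [VP HS]].
have N0 : (0 < N)%N by apply: leq_trans hN.
pose q0 : 'I_N := Ordinal N0.
pose p0 := part q0.
have [q1 Hq1] : exists q1, part q1 != p0.
  have M0 : (0 < M)%N by apply: leq_trans HM.
  pose o0 : 'I_M := Ordinal M0; pose o1 : 'I_M := Ordinal HM.
  pose p1 := if p0 == o0 then o1 else o0.
  have Hp1 : p1 != p0.
    rewrite /p1; case: ifP => [/eqP ->|/negbT H]; last by rewrite eq_sym.
    by apply/eqP => /(congr1 val).
  have [q Hq] := Hsurj p1; exists q; by rewrite Hq.
pose mix := mixQ part p0.
pose cross (i : I) := idx (mix (k i)).
have kneq : forall y : bits N, y != bcomp y.
  move=> y; apply/eqP => /ffunP /(_ q0); rewrite ffunE; by case: (y q0).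
have mixneq1 : forall y, mix y != y.
  move=> y; apply/eqP => /ffunP /(_ q1); rewrite /mix /mixQ /mrg !ffunE (negbTE Hq1).
  by case: (y q1).
have mixneq2 : forall y, mix y != bcomp y.
  move=> y; apply/eqP => /ffunP /(_ q0); rewrite /mix /mixQ /mrg !ffunE eqxx.
  by case: (y q0).
have crossK : forall i, cross (cross i) = i.
  move=> i; rewrite /cross; apply: idx_uniq.
  case: (idxP (mix (k i))) => E.
    by left; rewrite -E /mix mixQK.
  right; rewrite -[k (idx _)]bcompK -E /mix bcomp_mixQ mixQK //.
have crossN : forall i, cross i != i.
  move=> i; apply/eqP => E; case: (idxP (mix (k i))); rewrite /cross in E; rewrite E.
    by apply/eqP; rewrite mixneq1.
  by apply/eqP; rewrite mixneq2.
case: (boolP [exists i, [&& (i, true) \in S, (i, false) \in S &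
                           ((cross i, true) \in S) || ((cross i, false) \in S)]]).
  case/existsP => i /and3P [Ht Hf Hj]; exfalso.
  have [b Hb] : exists b, (cross i, b) \in S.
    by case/orP: Hj => H; [exists true | exists false].
  pose j := cross i.
  have na : `|alpha j| = alpha j by rewrite ger0_norm // ltW // alpha_pos.
  have nb : `|beta j| = beta j by rewrite ger0_norm // ltW // beta_pos.
  have [g [d [g0 gd1 Epj]]] : exists g d : C, [/\ g != 0, `|g| ^+ 2 + `|d| ^+ 2 = 1 &
     ghz k alpha beta (j, b) =
       (fun x => g * ket C (mix (k i)) x + d * ket C (bcomp (mix (k i))) x)].
    have a0 := alpha_pos j; have b0 := beta_pos j.
    case: (idxP (mix (k i))) => E; rewrite -/(cross i) -/j in E; rewrite E ?bcompK.
      case: b Hb => Hb.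
        exists (alpha j), (beta j); split; rewrite ?na ?nb ?hnorm ?gt_eqF //.
      exists (beta j), (- alpha j); split; rewrite ?normrN ?na ?nb ?gt_eqF // 1?addrC ?hnorm //.
      by apply: functional_extensionality => x; rewrite /ghz /= mulNr.
    case: b Hb => Hb.
      exists (beta j), (alpha j); split; rewrite ?na ?nb ?gt_eqF // 1?addrC ?hnorm //.
      by apply: functional_extensionality => x; rewrite /ghz /= addrC.
    exists (- alpha j), (beta j); split; rewrite ?normrN ?na ?nb ?oppr_eq0 ?gt_eqF ?hnorm //.
    by apply: functional_extensionality => x; rewrite /ghz /= mulNr addrC.
  have Epip : ghz k alpha beta (i, true) =
     (fun x => alpha i * ket C (k i) x + beta i * ket C (bcomp (k i)) x) by [].
  have Epim : ghz k alpha beta (i, false) =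
     (fun x => beta i * ket C (k i) x + - alpha i * ket C (bcomp (k i)) x).
    by apply: functional_extensionality => x; rewrite /ghz /= mulNr.
  have jneq : j != i := crossN i.
  apply: (key VP (@ket_prodform C _ _ part p0 (k i)) (kneq _) (kneq _) _ _ _
            (alpha_pos i) (beta_pos i) (hnorm i) g0 gd1 Epip Epim Epj
            (HS _ Ht) (HS _ Hf) (HS _ Hb)).
  - by rewrite xpair_eqE eqxx.
  - by rewrite xpair_eqE (negbTE jneq).
  - by rewrite xpair_eqE (negbTE jneq).
move/existsPn => Hno.
pose c (i : I) := (((i, true) \in S) + ((i, false) \in S))%N.
have cardS : #|S| = (\sum_i c i)%N.
  have -> : #|S| = (\sum_(p : I * bool) (((p.1, p.2) \in S) : nat))%N.
    rewrite -sum1_card big_mkcond /=; apply: eq_bigr => -[i b] _ /=.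
    by case: (_ \in S).
  rewrite -(pair_bigA _ (fun i b => (((i, b) \in S) : nat))) /=.
  by apply: eq_bigr => i _; rewrite big_bool.
have crossI : injective cross by apply: inv_inj crossK.
have H2 : forall i, (c i + c (cross i) <= 2)%N.
  move=> i; have := Hno i; have := Hno (cross i); rewrite crossK /c.
  case: ((i, true) \in S); case: ((i, false) \in S);
  case: ((cross i, true) \in S); case: ((cross i, false) \in S) => //.
have : (2 * #|S| <= 2 * 2 ^ (N - 1))%N.
  rewrite cardS mul2n -addnn.
  rewrite [X in (_ + X <= _)%N](reindex_inj crossI) /= -big_split /=.
  apply: (@leq_trans (\sum_(i : I) 2)%N); first by apply: leq_sum => i _; apply: H2.
  by rewrite sum_nat_const card_ord mulnC.
by rewrite leq_pmul2l.
Qed.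


Definition Proj (q : 'I_N) (b : bool) : op C N := fun x y => ((x == y) && (x q == b))%:R.
Definition upd (c : bits N) (q : 'I_N) (b : bool) : bits N :=
  [ffun r => if r == q then b else c r].

Fixpoint build (q0 : 'I_N) (m : nat) (c : bits N) : protocol C N N (I * bool)%type :=
  match m with
  | 0 => Leaf C N N (idx c, true)
  | m'.+1 => Node (insubd q0 m')
      [:: (Proj (insubd q0 m') false, build q0 m' (upd c (insubd q0 m') false));
          (Proj (insubd q0 m') true, build q0 m' (upd c (insubd q0 m') true))]
  end.

Lemma applyop_Proj q b (v : vec C N) x : applyop (Proj q b) v x = (x q == b)%:R * v x.
Proof.
rewrite /applyop (bigD1 x) //= /Proj eqxx /= big1 ?addr0 // => y /negbTE Hy.
by rewrite eq_sym Hy mul0r.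
Qed.

Lemma Proj_sum q b x y :
  \sum_z ((Proj q b z x)^* * Proj q b z y) = ((x == y) && (x q == b))%:R.
Proof.
rewrite (bigD1 x) //= big1 ?addr0; last first.
  by move=> z /negbTE Hz; rewrite /Proj Hz conjC0 mul0r.
rewrite /Proj eqxx /= conjC_nat.
by case: (x == y); case: (x q == b); rewrite ?mulr1 ?mulr0 ?mul1r ?mul0r.
Qed.

Lemma Proj_local q b : local_op (fun r : 'I_N => r) q (Proj q b).
Proof.
split.
  move=> x y H; rewrite /Proj; case: eqP => [E|] //=; exfalso; apply: H.
  by move=> r _; rewrite E.
move=> x y x' y' H1 H2 H3 H4.
have e : forall u w : bits N, (forall r, r != q -> u r = w r) -> (u == w) = (u q == w q).
  move=> u w H; apply/eqP/eqP => [->//|E]; apply/ffunP => r.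
  by case: (eqVneq r q) => [->|/H].
rewrite /Proj (e x y H1) (e x' y' H2) (H3 q erefl) (H4 q erefl) //.
Qed.

Lemma build_valid q0 m c : valid (fun r : 'I_N => r) (build q0 m c).
Proof.
elim: m c => [|m IH] c //=; split.
  move=> x y; rewrite !big_cons big_nil /= !Proj_sum addr0.
  by case: (x == y); case: (x _ ); rewrite /= ?addr0 ?add0r.
by do 2 (split; [exact: Proj_local | split; [exact: IH|]]).
Qed.

Lemma build_succ q0 m (c : bits N) (s : I * bool) (v : vec C N) : (m <= N)%N ->
  (forall x, v x != 0 -> forall r : 'I_N, (m <= r)%N -> x r = c r) ->
  succ_prob (build q0 m c) s v = \sum_x (if (idx x, true) == s then `|v x| ^+ 2 else 0).
Proof.
elim: m c v => [|m IH] c v HmN Hs /=.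
  have Hv : forall x, x != c -> v x = 0.
    move=> x Hx; apply/eqP; apply: contraNT Hx => /Hs H; apply/eqP/ffunP => r; exact: H.
  rewrite (bigD1 c) //= big1 ?addr0; last by move=> x /Hv ->; rewrite normr0 expr0n; case: ifP.
  case: ifP => // _; rewrite /norm2 (bigD1 c) //= big1 ?addr0 //.
  by move=> x /Hv ->; rewrite normr0 expr0n.
have mN : (m < N)%N by [].
set q := insubd q0 m.
have vq : val q = m by rewrite /q val_insubd mN.
have Hs' : forall b x, applyop (Proj q b) v x != 0 -> forall r : 'I_N, (m <= r)%N ->
    x r = upd c q b r.
  move=> b x; rewrite applyop_Proj mulf_eq0 negb_or => /andP[Hb Hvx] r Hr.
  rewrite /upd ffunE; case: (eqVneq r q) => [->|Hrq].
    by move: Hb; case: (x q =P b) => //= _; rewrite eqxx.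
  apply: Hs => //; rewrite ltn_neqAle Hr andbT; apply: contra Hrq => /eqP E.
  by apply/eqP/val_inj; rewrite vq E.
rewrite IH ?(ltnW mN) //; last exact: Hs'.
rewrite IH ?(ltnW mN) //; last exact: Hs'.
rewrite addr0 -big_split /=; apply: eq_bigr => x _.
rewrite !applyop_Proj; case: ifP => _; last by rewrite addr0.
by case: (x q); rewrite /= ?mul1r ?mul0r normr0 expr0n ?addr0 ?add0r.
Qed.

Lemma part2 : exists S : {set I * bool},
     #|S| = (2 ^ (N - 1))%N /\
     (forall i, exists b, (i, b) \in S) /\
     LOCC_dist (fun q : 'I_N => q) (ghz k alpha beta) (mem S).
Proof.
have N0 : (0 < N)%N by apply: leq_trans hN.
pose q0 : 'I_N := Ordinal N0.
exists ((fun i : I => (i, true)) @: setT); split.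
  by rewrite card_imset ?cardsT ?card_ord // => i j [].
split.
  by move=> i; exists true; apply: imset_f; rewrite in_setT.
exists (build q0 N (k (Ordinal (expn_gt0 2 (N - 1))))); split; first exact: build_valid.
move=> s Hs; have : s \in (fun i : I => (i, true)) @: setT := Hs.
case/imsetP => i _ ->.
rewrite build_succ // => [|x _ r]; last by rewrite leqNgt ltn_ord.
have kneq : k i != bcomp (k i).
  apply/eqP => /ffunP /(_ q0); rewrite ffunE; by case: (k i q0).
rewrite (_ : \sum_x _ = norm2 (ghz k alpha beta (i, true))).
  rewrite (_ : ghz k alpha beta (i, true) =
     (fun x => alpha i * ket C (k i) x + beta i * ket C (bcomp (k i)) x)) //.
  rewrite norm2_comb ?ket_cross // !norm2_ket !mulr1 !ger0_norm ?hnorm //.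
    by apply: ltW; apply: beta_pos.
  by apply: ltW; apply: alpha_pos.
rewrite /norm2; apply: eq_bigr => x _; case: ifP => // /negbT H.
have Hx1 : x != k i.
  apply: contra H => /eqP E; rewrite (@idx_uniq x i) //; by left.
have Hx2 : x != bcomp (k i).
  apply: contra H => /eqP E; rewrite (@idx_uniq x i) //; by right.
by rewrite /ghz /= /ket (negbTE Hx1) (negbTE Hx2) !mulr0 addr0 normr0 expr0n.
Qed.

End Main.

Unset Implicit Arguments.

Theorem theorem1 (C : numClosedFieldType) (N : nat) (hN : (2 <= N)%N)
  (k : 'I_(2 ^ (N - 1)) -> bits N) (hk : pairing k)
  (alpha beta : 'I_(2 ^ (N - 1)) -> C)
  (hab : forall i, 0 < beta i <= alpha i)
  (hnorm : forall i, alpha i ^+ 2 + beta i ^+ 2 = 1) :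
  (forall (M : nat) (part : 'I_N -> 'I_M), configuration part ->
     forall S : {set 'I_(2 ^ (N - 1)) * bool},
       LOCC_dist part (ghz k alpha beta) (mem S) -> (#|S| <= 2 ^ (N - 1))%N)
  /\
  (exists S : {set 'I_(2 ^ (N - 1)) * bool},
     #|S| = (2 ^ (N - 1))%N /\
     (forall i, exists b, (i, b) \in S) /\
     LOCC_dist (fun q : 'I_N => q) (ghz k alpha beta) (mem S)).
Proof.
split.
  move=> M part Hc S HS; exact: (part1 hN hk hab hnorm Hc HS).
exact: (part2 hN hk hab hnorm).
Qed.
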